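(* Let $\mathfrak h\in\mathrm{Mult}_\rho$ and let $\mathfrak n\in\mathrm{Mult}_\rho$ be admissible to $\mathfrak h$, $\mathfrak n\ne\emptyset$. Let $a$ be the smallest integer with $\mathfrak n[a]\ne\emptyset$ and let $\Delta\in\mathfrak n[a]$. If there exists a segment $\overline\Delta\in\mathfrak n[a+1]$ with $\overline\Delta\not\subset\Delta$ and $\overline\Delta\subset\Upsilon(\Delta,\mathfrak h)$, then $(\mathfrak n,\mathfrak h)$ is locally minimizable.
   Context: Segments: for integers $a\le b$, $[a,b]_\rho$ (think of the integer interval $\{a,\dots,b\}$), with $a(\Delta)=a$, $b(\Delta)=b$, and inclusion of segments as intervals. Two segments are linked if their union is a segment (an interval) and neither contains the other. A multisegment is a finite multiset of nonempty segments; $\mathrm{Mult}_\rho$ is the set of multisegments (including $\emptyset$); $+$ and $-$ denote multiset sum and difference. For $c\in\mathbb Z$, $\mathfrak m[c]$ is the submultisegment of segments $\Delta\in\mathfrak m$ with $a(\Delta)=c$. A sequence of segments $\Delta_1,\dots,\Delta_k$ is ascending if for $i<j$ either $\Delta_i,\Delta_j$ are unlinked or $a(\Delta_i)<a(\Delta_j)$. Write $[x,y]_\rho\prec^L[x',y']_\rho$ if $x<x'$, or $x=x'$ and $y<y'$. A segment $\Delta=[a,b]_\rho$ is admissible to $\mathfrak h$ if $\mathfrak h$ contains a segment $[a,c]_\rho$ with $c\ge b$. Removal process: for $\Delta=[a,b]_\rho$ admissible to $\mathfrak h$, let $\Delta_1=[a_1,b_1]_\rho$ be a shortest segment of $\mathfrak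 h$ with $a_1=a$ and $b_1\ge b$; recursively, let $\Delta_i=[a_i,b_i]_\rho$ be the $\prec^L$-minimal segment of $\mathfrak h$ with $a_{i-1}<a_i$ and $b\le b_i<b_{i-1}$, stopping when none exists; let $\Delta_1,\dots,\Delta_r$ be the segments obtained. Put $\Delta_i^{tr}=[a_{i+1},b_i]_\rho$ for $i<r$ and $\Delta_r^{tr}=[b+1,b_r]_\rho$ (possibly empty), and $\mathfrak r(\Delta,\mathfrak h)=\mathfrak h-\sum_i\Delta_i+\sum_i\Delta_i^{tr}$; also $\Upsilon(\Delta,\mathfrak h)=\Delta_1$. If $\Delta$ is not admissible, $\mathfrak r(\Delta,\mathfrak h)=\infty$, and $\mathfrak r(\Delta,\infty)=\infty$. For $\mathfrak m$ with segments in ascending order $\Delta_1,\dots,\Delta_k$, $\mathfrak r(\mathfrak m,\mathfrak h)=\mathfrak r(\Delta_k,\dots\mathfrak r(\Delta_1,\mathfrak h)\dots)$, and $\mathfrak m$ is admissible to $\mathfrak h$ if $\mathfrak r(\mathfrak m,\mathfrak h)\ne\infty$. For $\mathfrak n\ne\emptyset$ with $a$ minimal such that $\mathfrak n[a]\ne\emptyset$, enumerate $\mathfrak n[a]=\{\Delta_1,\dots,\Delta_k\}$; if $\mathfrak n[a]$ is admissible to $\mathfrak h$, put $\mathfrak r_0=\mathfrak h$, $\mathfrak r_i=\mathfrak r(\{\Delta_i,\dots,\Delta_1\},\mathfrak h)$ and $\mathfrak{fs}(\mathfrak n,\mathfrak h)=\{\Upsilon(\Delta_1,\mathfrak r_0),\dots,\Upsilon(\Delta_k,\mathfrak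 r_{k-1})\}$ (independent of the enumeration); otherwise $\mathfrak{fs}(\mathfrak n,\mathfrak h)=\emptyset$. Local minimizability: for $\mathfrak n$ admissible to $\mathfrak h$, with $a$ minimal such that $\mathfrak n[a]\ne\emptyset$, the pair $(\mathfrak n,\mathfrak h)$ is locally minimizable if there exists $\overline\Delta\in\mathfrak n[a+1]$ with $|\{\Delta\in\mathfrak n[a]:\overline\Delta\subset\Delta\}|<|\{\Delta\in\mathfrak{fs}(\mathfrak n,\mathfrak h):\overline\Delta\subset\Delta\}|$ (cardinalities counted with multiplicity). *)

(* Defs.v *)
(* Segments [a,b]_rho are encoded as pairs (a,b) of integers;
   multisegments as finite sequences of segments (multisets up to permutation). *)
From mathcomp Require Import all_boot all_order all_algebra.
Import Order.TTheory GRing.Theory Num.Theory.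
Local Open Scope ring_scope.

Definition seg := (int * int)%type.
Definition sa (D : seg) : int := D.1.
Definition sb (D : seg) : int := D.2.
Definition seg_valid (D : seg) : bool := sa D <= sb D.
Definition mult := seq seg.

Definition subseg (D E : seg) : bool := (sa E <= sa D) && (sb D <= sb E).

Definition ltL (D E : seg) : bool :=
  (sa D < sa E) || ((sa D == sa E) && (sb D < sb E)).
Definition leL (D E : seg) : bool :=
  (sa D < sa E) || ((sa D == sa E) && (sb D <= sb E)).

Definition minby (le : rel seg) (s : seq seg) : option seg :=
  foldr (fun x acc => match acc with
                      | None => Some x
                      | Some y => if le x y then Some x else Some y end) None s.

Definition msub (m : mult) (c : int) : mult := [seq D <- m | sa D == c].

(* Upsilon(D,h): a shortest segment of h with start a(D) and end >= b(D);
   None iff D is not admissible to h *)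
Definition Upsilon (D : seg) (h : mult) : option seg :=
  minby (fun x y => sb x <= sb y) [seq E <- h | (sa E == sa D) && (sb D <= sb E)].

(* the recursive part of the removal process: from Delta_{i-1} = prev,
   take the ≺^L-minimal segment E of h with a_{i-1} < a(E), b <= b(E) < b_{i-1} *)
Fixpoint rchain (fuel : nat) (h : mult) (b : int) (prev : seg) : seq seg :=
  match fuel with
  | 0%N => [::]
  | S f =>
    match minby leL [seq E <- h | [&& sa prev < sa E, b <= sb E & sb E < sb prev]] with
    | None => [::]
    | Some E => E :: rchain f h b E
    end
  end.

(* truncations Delta_i^tr = [a_{i+1}, b_i] (i<r), Delta_r^tr = [b+1, b_r] (dropped if empty) *)
Fixpoint truncs (b : int) (l : seq seg) : seq seg :=
  match l with
  | [::] => [::]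
  | [:: D] => if b < sb D then [:: (b + 1, sb D)] else [::]
  | D :: ((E :: _) as t) => (sa E, sb D) :: truncs b t
  end.

(* r(D,h); None encodes infinity *)
Definition remove1 (D : seg) (h : mult) : option mult :=
  match Upsilon D h with
  | None => None
  | Some D1 =>
    let l := D1 :: rchain (size h) h (sb D) D1 in
    Some (foldl (fun acc E => rem E acc) h l ++ truncs (sb D) l)
  end.

(* r(m,h), computed along the ascending order obtained by sorting m by ≺^L
   (sorting by starting point gives an ascending sequence). *)
Definition rmult (m h : mult) : option mult :=
  foldl (fun acc D => obind (remove1 D) acc) (Some h) (sort leL m).

Definition admissible (m h : mult) : bool := rmult m h != None.

Fixpoint fs_aux (l : seq seg) (r : mult) : seq seg :=
  match l with
  | [::] => [::]
  | D :: l' =>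
    match Upsilon D r, remove1 D r with
    | Some U, Some r' => U :: fs_aux l' r'
    | _, _ => [::]
    end
  end.

Definition fs_at (a : int) (n h : mult) : seq seg :=
  if admissible (msub n a) h then fs_aux (msub n a) h else [::].

Definition is_min_start (a : int) (n : mult) : Prop :=
  msub n a != [::] /\ (forall E, E \in n -> a <= sa E).

Definition locally_minimizable (n h : mult) : Prop :=
  admissible n h /\
  exists a : int, is_min_start a n /\
    exists Dbar, Dbar \in msub n (a + 1) /\
      (count (subseg Dbar) (msub n a) < count (subseg Dbar) (fs_at a n h))%N.

(* Main.v *)
Require Import Defs.
From mathcomp Require Import all_boot all_order all_algebra.
From mathcomp Require Import zify.
Import Order.TTheory GRing.Theory Num.Theory.
Local Open Scope ring_scope.
Set Implicit Arguments. Unset Strict Implicit.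

Lemma minby_in (le : rel seg) (s : seq seg) y : minby le s = Some y -> y \in s.
Proof.
elim: s y => [|x s IH] y //=; rewrite /minby /= -/(minby le s).
case E: (minby le s) => [z|].
  case: ifP => _ [<-]; first by rewrite mem_head.
  by rewrite in_cons IH ?orbT.
by move=> [<-]; rewrite mem_head.
Qed.

Lemma minby_none (le : rel seg) (s : seq seg) : minby le s = None -> s = [::].
Proof. case: s => //= x s; rewrite /minby /=; by case: (foldr _ _ _) => [?|]; first case: ifP. Qed.

Lemma minby_sb s y : minby (fun x y => sb x <= sb y) s = Some y ->
  forall z, z \in s -> sb y <= sb z.
Proof.
elim: s y => [|x s IH] y //=; rewrite /minby /= -/(minby _ s).
case E: (minby _ s) => [w|].
  case: ifP => Hx [<-] z; rewrite in_cons => /orP[/eqP->|zs].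
  - by [].
  - exact: le_trans Hx (IH _ E z zs).
  - by rewrite ltW // ltNge Hx.
  - exact: IH.
by move=> [<-] z; rewrite (minby_none E) in_cons orbF => /eqP->.
Qed.

Lemma UpsP x r U : Upsilon x r = Some U ->
  [/\ U \in r, sa U = sa x, sb x <= sb U &
   forall E, E \in r -> sa E = sa x -> sb x <= sb E -> sb U <= sb E].
Proof.
rewrite /Upsilon => M.
have := minby_in M; rewrite mem_filter => /andP[/andP[/eqP H1 H2] H3].
split=> // E Er Ea Eb; apply: (minby_sb M).
by rewrite mem_filter Er Ea eqxx Eb.
Qed.

Lemma Ups_some x r E : E \in r -> sa E = sa x -> sb x <= sb E ->
  exists U, Upsilon x r = Some U.
Proof.
move=> Er Ea Eb; rewrite /Upsilon.
have : E \in [seq E <- r | (sa E == sa x) && (sb x <= sb E)].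
  by rewrite mem_filter Er Ea eqxx Eb.
case: [seq _ <- _ | _] => // y s _; rewrite /minby /=.
by case: (foldr _ _ _) => [w|]; [case: ifP => _; eexists|eexists].
Qed.

Lemma rchain_sa f h b prev : all (fun E => sa prev < sa E) (rchain f h b prev).
Proof.
elim: f prev => [|f IH] prev //=.
case M: minby => [E|] //=.
have := minby_in M; rewrite mem_filter => /andP[/and3P[H1 _ _] _].
rewrite H1 /=; apply/allP => z zin.
exact: lt_trans H1 (allP (IH E) z zin).
Qed.

Lemma truncs_sa a b l : all (fun E => a < sa E) (behead l) -> a <= b ->
  all (fun E => a < sa E) (truncs b l).
Proof.
elim: l => [|D t IH] //= Ht ab.
case: t IH Ht => [|E t'] IH /=.
  by case: ifP => //= _; rewrite andbT /sa /=; lia.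
move=> /andP[HE Ht']; rewrite /sa /= HE /=; apply: IH => //=.
Qed.

Lemma filter_none (p : pred seg) s : all (predC p) s -> filter p s = [::].
Proof. by elim: s => //= x s IH /andP[/negbTE -> /IH]. Qed.

Lemma filter_rem_notin (p : pred seg) x s : ~~ p x -> filter p (rem x s) = filter p s.
Proof.
move=> px; elim: s => //= y s IH.
case: eqVneq => [->|ne] /=; first by rewrite (negbTE px).
by rewrite IH.
Qed.

Lemma filter_rem_in (p : pred seg) x s : p x -> filter p (rem x s) = rem x (filter p s).
Proof.
move=> px; elim: s => //= y s IH.
case: eqVneq => [->|ne] /=; first by rewrite px /= eqxx.
by case: ifP => //= _; rewrite (negbTE ne) IH.
Qed.

Lemma foldl_rem_notin (p : pred seg) l s : all (predC p) l ->
  filter p (foldl (fun acc E => rem E acc) s l) = filter p s.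
Proof.
elim: l s => //= x l IH s /andP[px pl].
by rewrite IH // filter_rem_notin.
Qed.

Lemma remove1P a x r r' : seg_valid x -> a <= sa x -> remove1 x r = Some r' ->
  exists U, Upsilon x r = Some U /\ msub r' a = msub (rem U r) a.
Proof.
move=> vx ax; rewrite /remove1; case HU: Upsilon => [U|] // [<-].
exists U; split=> //.
have [_ Ua _ _] := UpsP HU.
set ch := rchain (size r) r (sb x) U.
have Hch : all (fun E => a < sa E) ch.
  apply/allP => z zin; have := allP (rchain_sa (size r) r (sb x) U) z zin.
  rewrite Ua; exact: le_lt_trans.
have Ht : all (fun E => a < sa E) (truncs (sb x) (U :: ch)).
  apply: truncs_sa => //; move: vx; rewrite /seg_valid; exact: le_trans.
rewrite /msub filter_cat.
 have Ht2 : all (predC (fun D : seg => sa D == a)) (truncs (sb x) (U :: ch)).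
  by apply/allP=> E /(allP Ht) /= H; rewrite neq_lt orbC H.
rewrite (filter_none Ht2) cats0.
rewrite /= foldl_rem_notin //; apply/allP => z /(allP Hch) /= H.
by rewrite neq_lt orbC H.
Qed.

Definition cnt (t : int) (s : seq seg) := count (fun E => t <= sb E) s.
Definition hall (l H : seq seg) := forall t, (cnt t l <= cnt t H)%N.

Lemma foldl_None l : foldl (fun acc D => obind (remove1 D) acc) None l = None.
Proof. by elim: l. Qed.

Lemma msub_rem U r a : msub (rem U r) a = if sa U == a then rem U (msub r a) else msub r a.
Proof. by case: ifP => H; [apply: filter_rem_in | apply: filter_rem_notin; rewrite /= H]. Qed.

Lemma cnt_rem t U H : U \in H -> cnt t H = ((t <= sb U)%R + cnt t (rem U H))%N.
Proof. by move=> UH; rewrite /cnt (permP (perm_to_rem UH)). Qed.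

Lemma nec a l r : all (fun E => (a <= sa E) && seg_valid E) l ->
  foldl (fun acc D => obind (remove1 D) acc) (Some r) l != None ->
  hall (msub l a) (msub r a).
Proof.
elim: l r => [|x l IH] r /=; first by move=> _ _ t.
move=> /andP[/andP[ax vx] Hl]; case R: (remove1 x r) => [r'|]; last by rewrite foldl_None.
move=> /(IH _ Hl) Hh.
have [U [HU Hr']] := remove1P vx ax R.
have [Ur Ua xU _] := UpsP HU.
rewrite Hr' msub_rem Ua in Hh.
rewrite {1}/msub /= -/(msub l a).
case: eqP => xa.
  rewrite xa eqxx in Hh.
  have UH : U \in msub r a by rewrite mem_filter Ua xa eqxx.
  move=> t; have C := cnt_rem t UH; have Ht := Hh t.
  rewrite /cnt /= in C Ht *; rewrite C; move: Ht; case tx: (t <= sb x); last by simpl; lia.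
  by rewrite (le_trans tx xU) /=; lia.
by move: Hh; case: eqP.
Qed.

Lemma step a x l r : sa x = a -> seg_valid x -> hall (x::l) (msub r a) ->
 exists U r', [/\ Upsilon x r = Some U, remove1 x r = Some r',
   msub r' a = rem U (msub r a), hall l (msub r' a) &
   [/\ U \in r, sa U = a & sb x <= sb U]].
Proof.
move=> xa vx Hh.
have : (0 < cnt (sb x) (msub r a))%N.
  by have := Hh (sb x); rewrite /cnt /= lexx; lia.
rewrite /cnt -has_count => /hasP[E]; rewrite mem_filter => /andP[/eqP Ea Er] xE.
have [U HU] := Ups_some Er (etrans Ea (esym xa)) xE.
have [r' R] : exists r', remove1 x r = Some r' by rewrite /remove1 HU; eexists.
have ax : a <= sa x by rewrite xa.
have [U' [HU' Hr']] := remove1P vx ax R.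
rewrite HU in HU'; case: HU' Hr' => <- Hr'.
have [Ur Ua xU Umin] := UpsP HU.
have Hr2 : msub r' a = rem U (msub r a) by rewrite Hr' msub_rem Ua xa eqxx.
exists U, r'; split => //; last by rewrite Ua xa.
have UH : U \in msub r a by rewrite mem_filter Ua xa eqxx Ur.
rewrite Hr2 => t.
have := Hh t; rewrite {1}/cnt /= -/(cnt t l) (cnt_rem t UH).
case tx: (t <= sb x).
  by rewrite (le_trans tx xU) /=; lia.
case tU: (t <= sb U); last by simpl; lia.
have xt : sb x < t by rewrite ltNge tx.
have E1 : cnt t (msub r a) = cnt (sb x) (msub r a).
  apply: eq_in_count => E0; rewrite mem_filter => /andP[/eqP E0a E0r].
  apply/idP/idP => H.
    exact: le_trans (ltW xt) H.
  apply: le_trans tU _; apply: Umin => //; by rewrite E0a xa.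
have E2 : (cnt t l <= cnt (sb x) l)%N.
  by apply: sub_count => E0 /= H; exact: le_trans (ltW xt) H.
have := Hh (sb x); rewrite {1}/cnt /= lexx -/(cnt (sb x) l) -E1 (cnt_rem t UH) tU /=.
lia.
Qed.

Lemma suff a l r : all (fun E => (sa E == a) && seg_valid E) l -> hall l (msub r a) ->
  foldl (fun acc D => obind (remove1 D) acc) (Some r) l != None.
Proof.
elim: l r => [|x l IH] r //= /andP[/andP[/eqP xa vx] Hl] Hh.
have [U [r' [_ R _ Hh' _]]] := step xa vx Hh.
rewrite R /=; exact: IH.
Qed.

Lemma greedy a Dbar D l r : sa Dbar = a + 1 -> sa D = a -> sb D < sb Dbar ->
 all (fun E => (sa E == a) && seg_valid E) l -> hall l (msub r a) ->
 (forall E, E \in r -> sa E = a -> sb D <= sb E -> sb Dbar <= sb E) ->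
 (count (subseg Dbar) l + (D \in l) <= count (subseg Dbar) (fs_aux l r))%N.
Proof.
move=> Da DDa DDb; elim: l r => [|x l IH] r //= /andP[/andP[/eqP xa vx] Hl] Hh Q.
have [U [r' [HU R Hr' Hh' [Ur Ua xU]]]] := step xa vx Hh.
rewrite HU R /=.
have Q' : forall E, E \in r' -> sa E = a -> sb D <= sb E -> sb Dbar <= sb E.
  move=> E Er' Ea; apply: Q => //.
  have : E \in msub r' a by rewrite mem_filter Ea eqxx.
  by rewrite Hr' => /mem_rem; rewrite mem_filter => /andP[].
have := IH r' Hl Hh' Q'.
have aa : a <= a + 1 by rewrite lerDl.
have sx : subseg Dbar x = (sb Dbar <= sb x) by rewrite /subseg Da xa aa.
have sU : subseg Dbar U = (sb Dbar <= sb U) by rewrite /subseg Da Ua aa.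
rewrite in_cons sx sU.
case: (eqVneq D x) => [Dx|ne] /=.
  have DU : sb D <= sb U by rewrite Dx.
  rewrite (Q U Ur Ua DU) -Dx leNgt DDb /=.
  case: (D \in l); lia.
case: (D \in l); case bx: (sb Dbar <= sb x);
  rewrite ?(le_trans bx xU) /=; try lia; case: (sb Dbar <= sb U); simpl; lia.
Qed.

Unset Implicit Arguments.

Theorem mainTheorem9 (h n : mult) (a : int) (D : seg) :
  all seg_valid h -> all seg_valid n ->
  admissible n h -> n != [::] ->
  is_min_start a n ->
  D \in msub n a ->
  (exists Dbar U, [/\ Dbar \in msub n (a + 1), ~~ subseg Dbar D,
                     Upsilon D h = Some U & subseg Dbar U]) ->
  locally_minimizable n h.
Proof.
move=> vh vn adm nn [ne mins] Din [Dbar [U0 [Dbin nsub HU0 sU0]]].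
split => //; exists a; split; first by split.
exists Dbar; split => //.
move: Dbin; rewrite mem_filter => /andP[/eqP Da _].
move: (Din); rewrite mem_filter => /andP[/eqP DDa Dn].
have aa : a <= a + 1 by rewrite lerDl.
have DDb : sb D < sb Dbar.
  by move: nsub; rewrite /subseg DDa Da aa /= ltNge.
have Q : forall E, E \in h -> sa E = a -> sb D <= sb E -> sb Dbar <= sb E.
  have [_ _ _ Umin] := UpsP HU0.
  move=> E Eh Ea Eb; move/andP: sU0 => [_ H].
  by apply: le_trans H (Umin E Eh _ Eb); rewrite Ea DDa.
have Hn : hall (msub n a) (msub h a).
  have := nec (l := sort leL n) (r := h) (a := a).
  have P : perm_eq (msub (sort leL n) a) (msub n a) by apply: perm_filter; rewrite perm_sort.
  move=> H t; rewrite /cnt -(permP P); apply: H; last exact: adm.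
  apply/allP => E; rewrite mem_sort => En; rewrite mins //=; exact: (allP vn).
have Hla : all (fun E => (sa E == a) && seg_valid E) (msub n a).
  apply/allP => E; rewrite mem_filter => /andP[-> En] /=; exact: (allP vn).
have Had : admissible (msub n a) h.
  apply: (@suff a); first by apply/allP => E; rewrite mem_sort; exact: (allP Hla).
  by move=> t; rewrite /cnt (permP (permEl (perm_sort leL _))); apply: Hn.
rewrite /fs_at Had.
have := greedy Da DDa DDb Hla Hn Q; rewrite Din; lia.
Qed.
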